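(* Let $R$ be a unital ring, $e\in R$ an idempotent and $\alpha:R\to eRe$ a ring isomorphism. If $e$ is a full idempotent, i.e. $ReR=R$, then the corner skew Laurent polynomial ring $R[t_+,t_-;\alpha]$ is strongly $\mathbb{Z}$-graded.
   Context: $R[t_+,t_-;\alpha]$ is the universal unital ring equipped with a unital ring homomorphism $i:R\to R[t_+,t_-;\alpha]$ and elements $t_+,t_-$ satisfying $t_-t_+=1$, $t_+t_-=i(e)$, $i(r)t_-=t_-i(\alpha(r))$ and $t_+i(r)=i(\alpha(r))t_+$ for all $r\in R$. It is $\mathbb{Z}$-graded by $A_0=i(R)$, $A_i=Rt_+^{-i}$ for $i<0$ and $A_i=t_-^iR$ for $i>0$ (so $t_-\in A_1$, $t_+\in A_{-1}$). A $\mathbb{Z}$-graded ring is strongly graded if $A_mA_n=A_{m+n}$ for all $m,n$. *)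

(* Defs.v *)
From HB Require Import structures.
From mathcomp Require Import all_boot all_order all_algebra.
Set Implicit Arguments. Unset Strict Implicit. Unset Printing Implicit Defensive.
Import GRing.Theory.
Local Open Scope ring_scope.

(* The additive subgroup generated by all products p*q with P p, Q q:
   the product "A_m A_n" of two additive subgroups of a ring. *)
Definition prodset (A : pzRingType) (P Q : A -> Prop) (x : A) : Prop :=
  exists s : seq (A * A),
    (forall pq, pq \in s -> P pq.1 /\ Q pq.2) /\ x = \sum_(pq <- s) pq.1 * pq.2.

Definition is_idempotent (R : pzRingType) (e : R) : Prop := e * e = e.

Definition full_idem (R : pzRingType) (e : R) : Prop :=
  forall x : R, exists s : seq (R * R), x = \sum_(ab <- s) ab.1 * e * ab.2.

(* alpha : R -> eRe is a ring isomorphism (eRe has unit e) *)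
Definition corner_iso (R : pzRingType) (e : R) (alpha : R -> R) : Prop :=
  [/\ forall x y, alpha (x + y) = alpha x + alpha y,
      forall x y, alpha (x * y) = alpha x * alpha y,
      alpha 1 = e,
      injective alpha &
      forall y, (exists r, alpha r = y) <-> (exists r, y = e * r * e)].

Definition corner_rels (R S : pzRingType) (e : R) (alpha : R -> R)
    (j : R -> S) (tp tm : S) : Prop :=
  [/\ tm * tp = 1, tp * tm = j e,
      forall r, j r * tm = tm * j (alpha r) &
      forall r, tp * j r = j (alpha r) * tp].

Definition is_corner_skew_Laurent (R A : pzRingType) (e : R) (alpha : R -> R)
    (i : {rmorphism R -> A}) (tp tm : A) : Prop :=
  corner_rels e alpha i tp tm /\
  forall (S : pzRingType) (j : {rmorphism R -> S}) (sp sm : S),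
    corner_rels e alpha j sp sm ->
    (exists phi : {rmorphism A -> S},
        (forall r, phi (i r) = j r) /\ phi tp = sp /\ phi tm = sm) /\
    (forall phi psi : {rmorphism A -> S},
        (forall r, phi (i r) = j r) -> phi tp = sp -> phi tm = sm ->
        (forall r, psi (i r) = j r) -> psi tp = sp -> psi tm = sm ->
        forall x, phi x = psi x).

(* The homogeneous components: A_0 = i(R), A_{-k} = i(R) t_+^k, A_k = t_-^k i(R) *)
Definition laurent_comp (R A : pzRingType) (i : R -> A) (tp tm : A) (n : int) (x : A)
    : Prop :=
  match n with
  | Posz k => exists r, x = tm ^+ k * i r
  | Negz k => exists r, x = i r * tp ^+ k.+1
  end.

Definition strongly_graded (A : pzRingType) (C : int -> A -> Prop) : Prop :=
  forall (m n : int) (x : A), prodset (C m) (C n) x <-> C (m + n)%R x.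

(* Main.v *)
Require Import Defs.
From HB Require Import structures.
From mathcomp Require Import all_boot all_order all_algebra.
From mathcomp Require Import zify.
Local Open Scope ring_scope.
Import GRing.Theory.

Lemma prodset0 (A : pzRingType) (P Q : A -> Prop) : prodset P Q 0.
Proof. exists [::]; split => //; by rewrite big_nil. Qed.

Lemma prodsetD (A : pzRingType) (P Q : A -> Prop) x y :
  prodset P Q x -> prodset P Q y -> prodset P Q (x + y).
Proof.
case=> s [Hs ->] [t [Ht ->]]; exists (s ++ t); split; last by rewrite big_cat.
by move=> pq; rewrite mem_cat => /orP [/Hs|/Ht].
Qed.

Lemma prodset1 (A : pzRingType) (P Q : A -> Prop) p q :
  P p -> Q q -> prodset P Q (p * q).
Proof.
move=> Hp Hq; exists [:: (p, q)]; split; last by rewrite big_seq1.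
by move=> pq; rewrite inE => /eqP ->.
Qed.

Lemma prodsetM (A : pzRingType) (P Q P' Q' : A -> Prop) u v x :
  prodset P Q x -> (forall p, P p -> P' (u * p)) -> (forall q, Q q -> Q' (q * v)) ->
  prodset P' Q' (u * x * v).
Proof.
case=> s [Hs ->] HP HQ.
exists (map (fun pq => (u * pq.1, pq.2 * v)) s); split.
  move=> pq /mapP [pq' /Hs [H1 H2] ->] /=; split; [exact: HP|exact: HQ].
rewrite big_map mulr_sumr mulr_suml; apply: eq_bigr => pq _ /=.
by rewrite !mulrA.
Qed.

Arguments prodsetM {A P Q P' Q' u v x}.
Lemma prodset_sum (A : pzRingType) (T : Type) (P Q : A -> Prop) (s : seq T) (F : T -> A) :
  (forall t, prodset P Q (F t)) -> prodset P Q (\sum_(t <- s) F t).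
Proof.
move=> H; elim: s => [|t s IH]; first by rewrite big_nil; exact: prodset0.
by rewrite big_cons; apply: prodsetD.
Qed.

Lemma int_cases (m : int) : exists k : nat, m = k%:Z \/ m = - (k%:Z).
Proof. case: m => k; first by exists k; left. by exists k.+1; right; rewrite NegzE. Qed.

Theorem mainTheorem7 (R A : pzRingType) (e : R) (alpha : R -> R)
    (i : {rmorphism R -> A}) (tp tm : A) :
  is_idempotent e -> corner_iso e alpha ->
  is_corner_skew_Laurent e alpha i tp tm ->
  full_idem e ->
  strongly_graded (laurent_comp i tp tm).
Proof.
move=> hid [haD haM ha1 hinj hsurj] [[h1 h2 h3 h4] _] hfull.
set C := laurent_comp i tp tm.
have Cpos : forall (k : nat) x, C k%:Z x <-> exists r, x = tm ^+ k * i r by [].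
have Cneg : forall (k : nat) x, C (- k%:Z) x <-> exists r, x = i r * tp ^+ k.
  case=> [|k] x.
    rewrite oppr0 /C /=; split=> [[r ->]|[r ->]]; exists r;
      by rewrite expr0 mul1r mulr1.
  by rewrite -NegzE.
have F1 : forall (k : nat) r, i r * tm ^+ k = tm ^+ k * i (iter k alpha r).
  elim=> [|k IH] r; first by rewrite expr0 mul1r mulr1.
  by rewrite exprSr mulrA IH -mulrA h3 mulrA.
have F2 : forall (k : nat) r, tp ^+ k * i r = i (iter k alpha r) * tp ^+ k.
  elim=> [|k IH] r; first by rewrite expr0 mul1r mulr1.
  by rewrite exprS -mulrA IH mulrA h4 -mulrA.
have F3 : forall k : nat, tm ^+ k * tp ^+ k = 1.
  elim=> [|k IH]; first by rewrite expr0 mul1r.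
  by rewrite exprS exprSr -mulrA (mulrA (tm ^+ k)) IH mul1r h1.
have tme : tm * i e = tm by rewrite -h2 mulrA h1 mul1r.
have etp : i e * tp = tp by rewrite -h2 -mulrA h1 mulr1.
have F4 : forall t, exists r, tm * i t * tp = i r.
  move=> t; have [r hr] := (hsurj (e * t * e)).2 (ex_intro _ t erefl).
  exists r; rewrite -tme -etp mulrA -(mulrA tm) -rmorphM -(mulrA tm) -rmorphM.
  by rewrite -hr -h3 -mulrA h1 mulr1.
have F4k : forall (k : nat) t, exists r, tm ^+ k * i t * tp ^+ k = i r.
  elim=> [|k IH] t; first by exists t; rewrite expr0 mul1r mulr1.
  have [u hu] := IH t; have [r hr] := F4 u; exists r.
  have -> : tm ^+ k.+1 * i t * tp ^+ k.+1 = tm * (tm ^+ k * i t * tp ^+ k) * tp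
    by rewrite exprS exprSr !mulrA.
  by rewrite hu hr.
have ae : forall s, alpha s * e = alpha s by move=> s; rewrite -ha1 -haM mulr1.
have F5k : forall (k : nat) t, exists r, tp ^+ k * i t * tm ^+ k = i r.
  elim=> [|k IH] t; first by exists t; rewrite expr0 mul1r mulr1.
  have [u hu] := IH t; exists (alpha u).
  have -> : tp ^+ k.+1 * i t * tm ^+ k.+1 = tp * (tp ^+ k * i t * tm ^+ k) * tm
    by rewrite exprS exprSr !mulrA.
  by rewrite hu h4 -mulrA h2 -rmorphM ae.
have Cprod : forall m n p q, C m p -> C n q -> C (m + n) (p * q).
  move=> m n p q; have [a [->|->]] := int_cases m; have [b [->|->]] := int_cases n.
  - move=> /Cpos [r ->] /Cpos [s ->].
    rewrite -PoszD; apply/Cpos; exists (iter b alpha r * s).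
    by rewrite -mulrA (mulrA (i r)) F1 !mulrA -exprD rmorphM mulrA.
  - move=> /Cpos [r ->] /Cneg [s ->].
    have -> : tm ^+ a * i r * (i s * tp ^+ b) = tm ^+ a * i (r * s) * tp ^+ b
      by rewrite rmorphM !mulrA.
    case: (leqP b a) => hab.
    + have -> : a%:Z + - b%:Z = (a - b)%N%:Z by lia.
      have [u hu] := F4k b (r * s); apply/Cpos; exists u.
      by rewrite -hu -(subnK hab) exprD subnK // !mulrA.
    + have -> : a%:Z + - b%:Z = - (b - a)%N%:Z by lia.
      have [u hu] := F4k a (r * s); apply/Cneg; exists u.
      have -> : tp ^+ b = tp ^+ a * tp ^+ (b - a) by rewrite -exprD subnKC // ltnW.
      by rewrite mulrA hu.
  - move=> /Cneg [r ->] /Cpos [s ->].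
    case: (leqP b a) => hab.
    + have -> : - a%:Z + b%:Z = - (a - b)%N%:Z by lia.
      have [u hu] := F5k b 1; rewrite rmorph1 mulr1 in hu.
      apply/Cneg; exists (r * iter (a - b) alpha (u * s)).
      have -> : tp ^+ a = tp ^+ (a - b) * tp ^+ b by rewrite -exprD subnK.
      have -> : i r * (tp ^+ (a - b) * tp ^+ b) * (tm ^+ b * i s) =
        i r * (tp ^+ (a - b) * ((tp ^+ b * tm ^+ b) * i s)) by rewrite !mulrA.
      by rewrite hu -rmorphM F2 rmorphM mulrA.
    + have -> : - a%:Z + b%:Z = (b - a)%N%:Z by lia.
      have [u hu] := F5k a 1; rewrite rmorph1 mulr1 in hu.
      apply/Cpos; exists (iter (b - a) alpha (r * u) * s).
      have -> : tm ^+ b = tm ^+ a * tm ^+ (b - a) by rewrite -exprD subnKC // ltnW.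
      have -> : i r * tp ^+ a * (tm ^+ a * tm ^+ (b - a) * i s) =
        i r * (tp ^+ a * tm ^+ a) * tm ^+ (b - a) * i s by rewrite !mulrA.
      by rewrite hu -rmorphM F1 rmorphM !mulrA.
  - move=> /Cneg [r ->] /Cneg [s ->].
    rewrite -opprD -PoszD; apply/Cneg; exists (r * iter a alpha s).
    by rewrite -mulrA (mulrA (tp ^+ a)) F2 rmorphM exprD !mulrA.
have Uneg : forall k : nat, prodset (C (- k%:Z)) (C k%:Z) 1.
  elim=> [|k IH].
    rewrite -(mulr1 1) -{1}(rmorph1 i); apply: prodset1.
      by apply/Cneg; exists 1; rewrite expr0 mulr1.
    by apply/Cpos; exists 1; rewrite expr0 mul1r rmorph1.
  have [s hs] := hfull 1.
  have He : prodset (C (- k.+1%:Z)) (C k.+1%:Z) (i e).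
    have -> : i e = tp * 1 * tm by rewrite mulr1.
    apply: (prodsetM IH).
      by move=> p /Cneg [r ->]; apply/Cneg; exists (alpha r); rewrite mulrA h4 -mulrA -exprS.
    by move=> q /Cpos [r ->]; apply/Cpos; exists (alpha r); rewrite -mulrA h3 mulrA -exprSr.
  rewrite -(rmorph1 i) hs rmorph_sum; apply: prodset_sum => ab.
  rewrite !rmorphM; apply: (prodsetM He).
    by move=> p /Cneg [r ->]; apply/Cneg; exists (ab.1 * r); rewrite rmorphM mulrA.
  by move=> q /Cpos [r ->]; apply/Cpos; exists (r * ab.2); rewrite rmorphM mulrA.
have U : forall m, prodset (C m) (C (- m)) 1.
  move=> m; have [k [->|->]] := int_cases m; last by rewrite opprK.
  rewrite -(F3 k) -(mulr1 (tm ^+ k)) -(mul1r (tp ^+ k)) -{2}(rmorph1 i) -{1}(rmorph1 i).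
  by apply: prodset1; [apply/Cpos|apply/Cneg]; exists 1.
have Cadd : forall c x y, C c x -> C c y -> C c (x + y).
  by case=> k x y [r ->] [s ->]; exists (r + s); rewrite rmorphD ?mulrDr ?mulrDl.
have C0 : forall c, C c 0.
  by case=> k; exists 0; rewrite rmorph0 ?mulr0 ?mul0r.
move=> m n x; split.
  case=> s [Hs ->]; elim: s Hs => [|pq s IH] Hs; first by rewrite big_nil.
  rewrite big_cons; apply: Cadd; last by apply: IH => pq' h; apply: Hs; rewrite inE h orbT.
  by have [Hp Hq] := Hs pq (mem_head _ _); apply: Cprod.
move=> Hx; rewrite -(mul1r x) -(mul1r 1) -mulrA mul1r -(mul1r (1 * x)) mulrA.
apply: (prodsetM (U m)) => [p Hp|q Hq]; first by rewrite mul1r.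
by have := Cprod _ _ _ _ Hq Hx; rewrite addrA addNr add0r.
Qed.
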